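(* Let $(X,\|\cdot\|_X)$ be a strictly convex two-dimensional real normed space such that the set of points of $S_X$ where $\|\cdot\|_X$ is not differentiable is finite. Let $C_X\subset X$ be a piecewise $C^1$ Jordan curve enclosing a convex set, and let $a\in C_X$ be a point at which $C_X$ is differentiable. Define $\operatorname{NDif}(a)=\{b\in C_X: t\mapsto\|\gamma_a(t)-b\|_X \text{ is not differentiable at } t=0\}$. Then $\operatorname{NDif}(a)$ is the union of a finite set and at most one segment, and if such a segment is present, one of its endpoints is $a$.
   Context: Fix the anticlockwise orientation of $X\cong\mathbb{R}^2$. For a point $a$ on a convex, piecewise $C^1$ Jordan curve $C\subset X$ of $\|\cdot\|_X$-length $L$, $\gamma_a:\mathbb{R}\to C$ denotes the unique anticlockwise, $L$-periodic map with $\gamma_a(0)=a$, injective on $[0,L)$, having one-sided derivatives at every $t$, all of $\|\cdot\|_X$-norm $1$. $C$ is differentiable at $\gamma_a(t)$ iff the one-sided derivatives of $\gamma_a$ at $t$ coincide. A norm is strictly convex if its unit sphere contains no nontrivial segment. *)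

(* Defs.v *)
From Stdlib Require Import Reals Lra List.
From Coquelicot Require Import Coquelicot.
Open Scope R_scope.

Definition pt := (R * R)%type.
Definition padd (x y : pt) : pt := (fst x + fst y, snd x + snd y).
Definition psub (x y : pt) : pt := (fst x - fst y, snd x - snd y).
Definition pscal (c : R) (x : pt) : pt := (c * fst x, c * snd x).
(* Euclidean length, only used to express (norm-independent) topology *)
Definition enorm (x : pt) : R := sqrt (fst x ^ 2 + snd x ^ 2).
Definition det (x y : pt) : R := fst x * snd y - snd x * fst y.

Definition is_norm (N : pt -> R) : Prop :=
  (forall x, N x = 0 <-> x = (0, 0)) /\
  (forall c x, N (pscal c x) = Rabs c * N x) /\
  (forall x y, N (padd x y) <= N x + N y).

Definition strictly_convex (N : pt -> R) : Prop :=
  ~ (exists x y : pt, x <> y /\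
       forall l, 0 <= l <= 1 -> N (padd (pscal (1 - l) x) (pscal l y)) = 1).

Definition differentiable2 (f : pt -> R) (x : pt) : Prop :=
  exists p q : R, forall eps, 0 < eps -> exists delta, 0 < delta /\
    forall h : pt, 0 < enorm h < delta ->
      Rabs (f (padd x h) - f x - (p * fst h + q * snd h)) <= eps * enorm h.

Definition finitely_many_nondiff_on_sphere (N : pt -> R) : Prop :=
  exists l : list pt, forall x, N x = 1 -> ~ differentiable2 N x -> In x l.

Definition is_rderiv (g : R -> pt) (t : R) (v : pt) : Prop :=
  filterlim (fun h => (fst (g (t + h)) - fst (g t)) / h) (at_right 0) (locally (fst v)) /\
  filterlim (fun h => (snd (g (t + h)) - snd (g t)) / h) (at_right 0) (locally (snd v)).
Definition is_lderiv (g : R -> pt) (t : R) (v : pt) : Prop :=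
  filterlim (fun h => (fst (g (t + h)) - fst (g t)) / h) (at_left 0) (locally (fst v)) /\
  filterlim (fun h => (snd (g (t + h)) - snd (g t)) / h) (at_left 0) (locally (snd v)).

Definition C1_on (g : R -> pt) (u v : R) : Prop :=
  exists dg : R -> pt,
    (forall t, u <= t <= v ->
       filterlim dg (within (fun s => u <= s <= v) (locally t)) (locally (dg t))) /\
    (forall t, u < t < v ->
       is_derive (fun s => fst (g s)) t (fst (dg t)) /\
       is_derive (fun s => snd (g s)) t (snd (dg t))) /\
    is_rderiv g u (dg u) /\ is_lderiv g v (dg v).

Definition piecewise_C1 (g : R -> pt) (L : R) : Prop :=
  exists (n : nat) (p : nat -> R), p 0%nat = 0 /\ p n = L /\
    forall i, (i < n)%nat -> p i < p (S i) /\ C1_on g (p i) (p (S i)).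

Definition curve_image (g : R -> pt) (L : R) (x : pt) : Prop :=
  exists t, 0 <= t < L /\ g t = x.

Definition convex_set (K : pt -> Prop) : Prop :=
  forall x y l, K x -> K y -> 0 <= l <= 1 -> K (padd (pscal (1 - l) x) (pscal l y)).

Definition boundary (K : pt -> Prop) (x : pt) : Prop :=
  forall eps, 0 < eps ->
    (exists y, K y /\ enorm (psub y x) < eps) /\
    (exists z, ~ K z /\ enorm (psub z x) < eps).

(* anticlockwise orientation of a convex curve: the enclosed region lies
   to the left of the (right) tangent direction at every point *)
Definition anticlockwise (g : R -> pt) : Prop :=
  forall t v s, is_rderiv g t v -> 0 <= det v (psub (g s) (g t)).

(* g is the map gamma_a of the paper for the convex piecewise C^1 Jordan
   curve C = curve_image g L, with a = g 0 *)
Definition is_gamma (N : pt -> R) (g : R -> pt) (L : R) : Prop :=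
  0 < L /\
  (forall t, g (t + L) = g t) /\
  (forall s t, 0 <= s < L -> 0 <= t < L -> g s = g t -> s = t) /\
  piecewise_C1 g L /\
  (forall t, exists v w, is_rderiv g t v /\ is_lderiv g t w /\ N v = 1 /\ N w = 1) /\
  (exists K, convex_set K /\ forall x, curve_image g L x <-> boundary K x) /\
  anticlockwise g.

Definition segment (a c x : pt) : Prop :=
  exists l, 0 <= l <= 1 /\ x = padd (pscal (1 - l) a) (pscal l c).

(* Main.v *)
Require Import Defs.
From Stdlib Require Import Reals List Lra Psatz ClassicalEpsilon Classical.
From Coquelicot Require Import Coquelicot.
Open Scope R_scope.

Lemma pt_eq (x y : pt) : fst x = fst y -> snd x = snd y -> x = y.
Proof. destruct x, y; simpl; intros; subst; reflexivity. Qed.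

Lemma Ra1 : Rabs (-1) = 1.
Proof. unfold Rabs; destruct Rcase_abs; lra. Qed.

Lemma norm_nonneg N (HN : is_norm N) u : 0 <= N u.
Proof.
  destruct HN as [H0 [Hs Ht]].
  assert (E : padd u (pscal (-1) u) = (0,0)) by (apply pt_eq; simpl; ring).
  pose proof (Ht u (pscal (-1) u)) as T. rewrite E, Hs in T.
  assert (N (0,0) = 0) by (apply H0; reflexivity).
  rewrite Ra1 in T. lra.
Qed.

Lemma norm_bound N (HN : is_norm N) u :
  N u <= (N (1,0) + N (0,1)) * (Rabs (fst u) + Rabs (snd u)).
Proof.
  pose proof (norm_nonneg N HN (1,0)). pose proof (norm_nonneg N HN (0,1)).
  destruct HN as [Hz [Hs Ht]].
  replace u with (padd (pscal (fst u) (1,0)) (pscal (snd u) (0,1))) at 1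
    by (apply pt_eq; simpl; ring).
  eapply Rle_trans; [apply Ht|]. rewrite !Hs.
  pose proof (Rabs_pos (fst u)). pose proof (Rabs_pos (snd u)). nra.
Qed.

Lemma norm_rev N (HN : is_norm N) u w : Rabs (N u - N w) <= N (psub u w).
Proof.
  pose proof HN as HN'. destruct HN' as [H0 [Hs Ht]].
  apply Rabs_le. split.
  - pose proof (Ht u (pscal (-1) (psub u w))) as T.
    replace (padd u (pscal (-1) (psub u w))) with w in T by (apply pt_eq; simpl; ring).
    rewrite Hs, Ra1 in T. lra.
  - pose proof (Ht w (psub u w)) as T.
    replace (padd w (psub u w)) with u in T by (apply pt_eq; simpl; ring). lra.
Qed.

Lemma norm_zero N (HN : is_norm N) : N (0,0) = 0.
Proof. destruct HN as [H0 _]. apply H0; reflexivity. Qed.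

Lemma norm_pos_ne N (HN : is_norm N) v : N v = 1 -> v <> (0,0).
Proof. intros H E; subst. rewrite norm_zero in H; auto. lra. Qed.

Lemma lim_lin (F : R -> R) (l : R) :
  filterlim (fun h => (F (0 + h) - F 0) / h) (at_right 0) (locally l) ->
  filterlim (fun h => (F (0 + h) - F 0) / h) (at_left 0) (locally l) ->
  forall eps, 0 < eps -> exists d, 0 < d /\ forall h, h <> 0 -> Rabs h < d ->
    Rabs (F h - F 0 - h * l) <= eps * Rabs h.
Proof.
  intros Hr Hl eps Heps.
  apply filterlim_locally with (eps := mkposreal eps Heps) in Hr.
  apply filterlim_locally with (eps := mkposreal eps Heps) in Hl.
  destruct Hr as [d1 H1]. destruct Hl as [d2 H2].
  exists (Rmin d1 d2). split. { apply Rmin_pos; apply cond_pos. }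
  intros h Hh Hd.
  assert (B : Rabs ((F (0 + h) - F 0) / h - l) < eps).
  { destruct (Rlt_or_le 0 h) as [Hp|Hn].
    - apply (H1 h); [|exact Hp]. change (Rabs (h - 0) < d1).
      rewrite Rminus_0_r. pose proof (Rmin_l d1 d2). lra.
    - apply (H2 h); [|lra]. change (Rabs (h - 0) < d2).
      rewrite Rminus_0_r. pose proof (Rmin_r d1 d2). lra. }
  rewrite Rplus_0_l in B.
  replace (F h - F 0 - h * l) with (h * ((F h - F 0) / h - l)) by (field; auto).
  rewrite Rabs_mult. rewrite Rmult_comm. apply Rmult_le_compat_r; [apply Rabs_pos|lra].
Qed.

Definition gdiff (g : R -> pt) (v : pt) : Prop :=
  forall eps, 0 < eps -> exists d, 0 < d /\ forall h, h <> 0 -> Rabs h < d ->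
    Rabs (fst (g h) - fst (g 0) - h * fst v) <= eps * Rabs h /\
    Rabs (snd (g h) - snd (g 0) - h * snd v) <= eps * Rabs h.

Lemma gdiff_of g v : is_rderiv g 0 v -> is_lderiv g 0 v -> gdiff g v.
Proof.
  intros [R1 R2] [L1 L2] eps Heps.
  destruct (lim_lin (fun t => fst (g t)) (fst v) R1 L1 eps Heps) as [d1 [P1 Q1]].
  destruct (lim_lin (fun t => snd (g t)) (snd v) R2 L2 eps Heps) as [d2 [P2 Q2]].
  exists (Rmin d1 d2). split; [apply Rmin_pos; auto|].
  intros h H0 Hd. pose proof (Rmin_l d1 d2). pose proof (Rmin_r d1 d2).
  split; [apply Q1|apply Q2]; auto; lra.
Qed.
Definition dirdiff (N : pt -> R) (y v : pt) (l : R) : Prop :=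
  forall eps, 0 < eps -> exists d, 0 < d /\ forall h, Rabs h < d ->
    Rabs (N (padd y (pscal h v)) - N y - h * l) <= eps * Rabs h.

Lemma f_deriv N g b v l : is_norm N -> gdiff g v -> dirdiff N (psub (g 0) b) v l ->
  ex_derive (fun t => N (psub (g t) b)) 0.
Proof.
  intros HN Hg Hd. exists l. apply is_derive_Reals. intros eps Heps.
  set (B := N (1,0) + N (0,1)).
  assert (HB : 0 <= B) by (unfold B; pose proof (norm_nonneg N HN (1,0)); pose proof (norm_nonneg N HN (0,1)); lra).
  destruct (Hd (eps/2)) as [d1 [P1 Q1]]; [lra|].
  destruct (Hg (eps/(4*(B+1)))) as [d2 [P2 Q2]]. { apply Rdiv_lt_0_compat; lra. }
  assert (Pm : 0 < Rmin d1 d2) by (apply Rmin_pos; auto).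
  exists (mkposreal _ Pm). intros h Hh Hlt. simpl in Hlt.
  pose proof (Rmin_l d1 d2). pose proof (Rmin_r d1 d2).
  rewrite Rplus_0_l.
  set (y := psub (g 0) b).
  destruct (Q2 h Hh ltac:(lra)) as [A1 A2].
  pose proof (Q1 h ltac:(lra)) as T2. fold y in T2.
  pose proof (norm_rev N HN (psub (g h) b) (padd y (pscal h v))) as T1.
  assert (T3 : N (psub (psub (g h) b) (padd y (pscal h v))) <= B *
     (Rabs (fst (g h) - fst (g 0) - h * fst v) + Rabs (snd (g h) - snd (g 0) - h * snd v))).
  { eapply Rle_trans; [apply (norm_bound N HN)|]. fold B. right. unfold y. simpl.
    f_equal. f_equal; f_equal; ring. }
  assert (Hh' : 0 < Rabs h) by (apply Rabs_pos_lt; auto).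
  assert (K : Rabs (N (psub (g h) b) - N y - h * l) < eps * Rabs h).
  { assert (E : N (psub (g h) b) - N y - h * l =
       (N (psub (g h) b) - N (padd y (pscal h v))) + (N (padd y (pscal h v)) - N y - h * l)) by ring.
    rewrite E. eapply Rle_lt_trans; [apply Rabs_triang|].
    assert (Z : B * (eps / (4 * (B + 1)) * Rabs h + eps / (4 * (B + 1)) * Rabs h) < eps / 2 * Rabs h).
    { replace (B * (eps / (4 * (B + 1)) * Rabs h + eps / (4 * (B + 1)) * Rabs h))
        with ((B / (B+1)) * (eps / 2 * Rabs h)) by (field; lra).
      assert (B / (B+1) < 1) by (apply Rmult_lt_reg_r with (B+1); [lra|]; unfold Rdiv; rewrite Rmult_assoc, Rinv_l; lra).
      assert (0 < eps/2 * Rabs h) by (apply Rmult_lt_0_compat; lra).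
      nra. }
    assert (Rabs (fst (g h) - fst (g 0) - h * fst v) + Rabs (snd (g h) - snd (g 0) - h * snd v) <=
            eps / (4 * (B + 1)) * Rabs h + eps / (4 * (B + 1)) * Rabs h) by lra.
    assert (B * (Rabs (fst (g h) - fst (g 0) - h * fst v) + Rabs (snd (g h) - snd (g 0) - h * snd v)) <=
            B * (eps / (4 * (B + 1)) * Rabs h + eps / (4 * (B + 1)) * Rabs h)) by (apply Rmult_le_compat_l; lra).
    lra. }
  replace ((N (psub (g h) b) - N y) / h - l) with ((N (psub (g h) b) - N y - h * l) / h) by (unfold y; field; auto).
  unfold Rdiv. rewrite Rabs_mult, Rabs_inv.
  apply Rmult_lt_reg_r with (Rabs h); auto. rewrite Rmult_assoc, Rinv_l; lra.
Qed.

Lemma enorm_scal h v : enorm (pscal h v) = Rabs h * enorm v.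
Proof.
  unfold enorm, pscal; cbn [fst snd].
  replace ((h * fst v) ^ 2 + (h * snd v) ^ 2) with (Rsqr h * (fst v ^ 2 + snd v ^ 2)) by (unfold Rsqr; ring).
  rewrite sqrt_mult; [|apply Rle_0_sqr|nra]. rewrite sqrt_Rsqr_abs. reflexivity.
Qed.

Lemma enorm_pos v : v <> (0,0) -> 0 < enorm v.
Proof.
  intros H. unfold enorm. apply sqrt_lt_R0. destruct v as [a c]; simpl.
  destruct (Req_dec a 0); destruct (Req_dec c 0); subst; try (exfalso; apply H; reflexivity); nra.
Qed.

Lemma dir_diff N y v : differentiable2 N y -> v <> (0,0) ->
  exists l, dirdiff N y v l.
Proof.
  intros [p [q Hd]] Hv. exists (p * fst v + q * snd v). intros eps Heps.
  pose proof (enorm_pos v Hv) as Ev.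
  destruct (Hd (eps / enorm v)) as [d [Pd Qd]]. { apply Rdiv_lt_0_compat; lra. }
  exists (d / enorm v). split; [apply Rdiv_lt_0_compat; lra|].
  intros h Hh. destruct (Req_dec h 0) as [E|E].
  - subst. replace (padd y (pscal 0 v)) with y by (apply pt_eq; simpl; ring).
    rewrite Rabs_R0. replace (N y - N y - 0 * (p * fst v + q * snd v)) with 0 by ring.
    rewrite Rabs_R0. lra.
  - assert (Hh' : 0 < Rabs h) by (apply Rabs_pos_lt; auto).
    assert (Q := Qd (pscal h v)). rewrite enorm_scal in Q.
    assert (0 < Rabs h * enorm v < d).
    { split; [nra|]. apply Rmult_lt_reg_r with (/ enorm v). apply Rinv_0_lt_compat; lra.
      rewrite Rmult_assoc, Rinv_r; lra. }
    specialize (Q H). simpl in Q.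
    replace (h * (p * fst v + q * snd v)) with (p * (h * fst v) + q * (h * snd v)) by ring.
    eapply Rle_trans; [exact Q|]. right. field. lra.
Qed.

Lemma par_diff N y v : is_norm N -> y <> (0,0) -> det v y = 0 -> exists l, dirdiff N y v l.
Proof.
  intros HN Hy Hdet. destruct HN as [H0 [Hs Ht]].
  destruct y as [y1 y2]; destruct v as [v1 v2]. unfold det in Hdet; simpl in Hdet.
  assert (Q : 0 < y1 ^ 2 + y2 ^ 2).
  { destruct (Req_dec y1 0); destruct (Req_dec y2 0); subst; try (exfalso; apply Hy; reflexivity); nra. }
  set (c := (v1 * y1 + v2 * y2) / (y1 ^ 2 + y2 ^ 2)).
  assert (C1 : v1 = c * y1).
  { assert (v1 * (y1 ^ 2 + y2 ^ 2) = (v1 * y1 + v2 * y2) * y1) by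
      (apply Rminus_diag_uniq; replace (v1 * (y1 ^ 2 + y2 ^ 2) - (v1 * y1 + v2 * y2) * y1) with (y2 * (v1 * y2 - v2 * y1)) by ring;
       rewrite Hdet; ring).
    unfold c. unfold Rdiv. rewrite Rmult_comm, <- Rmult_assoc, (Rmult_comm y1), <- H. field. lra. }
  assert (C2 : v2 = c * y2).
  { assert (v2 * (y1 ^ 2 + y2 ^ 2) = (v1 * y1 + v2 * y2) * y2) by
      (apply Rminus_diag_uniq;
       replace (v2 * (y1 ^ 2 + y2 ^ 2) - (v1 * y1 + v2 * y2) * y2) with (- y1 * (v1 * y2 - v2 * y1)) by ring;
       rewrite Hdet; ring).
    unfold c. unfold Rdiv. rewrite Rmult_comm, <- Rmult_assoc, (Rmult_comm y2), <- H. field. lra. }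
  exists (c * N (y1, y2)). intros eps Heps.
  exists (/ (Rabs c + 1)). split. { apply Rinv_0_lt_compat. pose proof (Rabs_pos c); lra. }
  intros h Hh.
  replace (padd (y1, y2) (pscal h (v1, v2))) with (pscal (1 + h * c) (y1, y2))
    by (apply pt_eq; simpl; [rewrite C1|rewrite C2]; ring).
  rewrite Hs.
  assert (0 < 1 + h * c).
  { assert (Rabs (h * c) < 1).
    { rewrite Rabs_mult. pose proof (Rabs_pos c). pose proof (Rabs_pos h).
      apply Rmult_lt_reg_r with (Rabs c + 1); [lra|].
      assert (Rabs h * (Rabs c + 1) < 1).
      { apply Rmult_lt_reg_r with (/ (Rabs c + 1)). apply Rinv_0_lt_compat; lra.
        rewrite Rmult_assoc, Rinv_r, Rmult_1_l, Rmult_1_r; lra. }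
      nra. }
    pose proof (Rle_abs (- (h * c))) as RR. rewrite Rabs_Ropp in RR. lra. }
  rewrite (Rabs_pos_eq (1 + h * c)) by lra.
  replace ((1 + h * c) * N (y1, y2) - N (y1, y2) - h * (c * N (y1, y2))) with 0 by ring.
  rewrite Rabs_R0. pose proof (Rabs_pos h). nra.
Qed.

Lemma diff_scal N x c : is_norm N -> differentiable2 N x -> 0 < c -> differentiable2 N (pscal c x).
Proof.
  intros HN [p [q Hd]] Hc. destruct HN as [H0 [Hs Ht]]. exists p, q. intros eps Heps.
  destruct (Hd eps Heps) as [d [Pd Qd]]. exists (c * d). split; [nra|].
  intros h Hh. specialize (Qd (pscal (/c) h)). rewrite enorm_scal in Qd.
  rewrite Rabs_pos_eq in Qd by (left; apply Rinv_0_lt_compat; lra).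
  assert (0 < / c * enorm h < d).
  { split. apply Rmult_lt_0_compat; [apply Rinv_0_lt_compat|]; lra.
    apply Rmult_lt_reg_l with c; auto. rewrite <- Rmult_assoc, Rinv_r, Rmult_1_l; lra. }
  specialize (Qd H).
  replace (padd (pscal c x) h) with (pscal c (padd x (pscal (/ c) h))) by (apply pt_eq; simpl; field; lra).
  rewrite !Hs. rewrite (Rabs_pos_eq c) by lra.
  replace (c * N (padd x (pscal (/ c) h)) - c * N x - (p * fst h + q * snd h))
    with (c * (N (padd x (pscal (/ c) h)) - N x - (p * fst (pscal (/ c) h) + q * snd (pscal (/ c) h))))
    by (simpl; field; lra).
  rewrite Rabs_mult, (Rabs_pos_eq c) by lra.
  replace (eps * enorm h) with (c * (eps * (/ c * enorm h))) by (field; lra).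
  apply Rmult_le_compat_l; lra.
Qed.

Lemma ray_core N g L v x s1 s2 : is_norm N -> is_gamma N g L -> gdiff g v -> det v x <> 0 ->
  curve_image g L (psub (g 0) (pscal s1 x)) -> curve_image g L (psub (g 0) (pscal s2 x)) ->
  0 < s1 -> s1 < s2 -> False.
Proof.
  intros HN HG Hg Hdx [t1 [_ E1]] [t2 [_ E2]] Hs1 Hs12.
  destruct HG as [_ [_ [_ [_ [Hder [_ Hac]]]]]].
  destruct (Hder t1) as [w [w' [Hw [_ [Nw _]]]]].
  pose proof (norm_pos_ne N HN w Nw) as Wn.
  pose proof (Hac t1 w 0 Hw) as A0. pose proof (Hac t1 w t2 Hw) as A2.
  rewrite E2, E1 in A2. rewrite E1 in A0.
  destruct w as [w1 w2]; destruct x as [x1 x2]; destruct v as [v1 v2].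
  unfold det, psub, pscal in *; simpl in *.
  assert (Dx : w1 * x2 - w2 * x1 = 0) by nra.
  set (D := w1 * v2 - w2 * v1).
  assert (DD : D <> 0).
  { intro HD. apply Wn. unfold D in HD.
    assert ((v1 * x2 - v2 * x1) * w1 = 0).
    { replace ((v1 * x2 - v2 * x1) * w1) with (v1 * (w1 * x2 - w2 * x1) - x1 * (w1 * v2 - w2 * v1)) by ring.
      rewrite Dx, HD; ring. }
    assert ((v1 * x2 - v2 * x1) * w2 = 0).
    { replace ((v1 * x2 - v2 * x1) * w2) with (v2 * (w1 * x2 - w2 * x1) - x2 * (w1 * v2 - w2 * v1)) by ring.
      rewrite Dx, HD; ring. }
    apply Rmult_integral in H; apply Rmult_integral in H0.
    destruct H; [contradiction|]; destruct H0; [contradiction|]. subst; reflexivity. }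
  assert (HAll : forall s, 0 <= w1 * (snd (g s) - snd (g 0)) - w2 * (fst (g s) - fst (g 0))).
  { intro s. pose proof (Hac t1 (w1, w2) s Hw) as A. rewrite E1 in A. unfold det, psub, pscal in A; simpl in A. nra. }
  set (K := Rabs w1 + Rabs w2 + 1).
  assert (HK : 0 < K) by (unfold K; pose proof (Rabs_pos w1); pose proof (Rabs_pos w2); lra).
  assert (HD : 0 < Rabs D) by (apply Rabs_pos_lt; auto).
  destruct (Hg (Rabs D / (2 * K))) as [d [Pd Qd]]. { apply Rdiv_lt_0_compat; lra. }
  set (h := if Rle_dec D 0 then d / 2 else - (d / 2)).
  assert (Hh : Rabs h = d / 2 /\ h * D = - (Rabs D * (d / 2))).
  { unfold h. destruct (Rle_dec D 0).
    - rewrite Rabs_pos_eq by lra. rewrite Rabs_left by lra. split; [reflexivity|]. destruct r; [ring|contradiction].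
    - rewrite Rabs_Ropp, Rabs_pos_eq by lra. rewrite Rabs_pos_eq by lra. split; [reflexivity|ring]. }
  destruct Hh as [Hh1 Hh2].
  assert (h <> 0) by (intro Z; rewrite Z, Rabs_R0 in Hh1; lra).
  destruct (Qd h H ltac:(lra)) as [B1 B2]. simpl in B1, B2.
  set (r1 := fst (g h) - fst (g 0) - h * v1) in *.
  set (r2 := snd (g h) - snd (g 0) - h * v2) in *.
  specialize (HAll h).
  replace (w1 * (snd (g h) - snd (g 0)) - w2 * (fst (g h) - fst (g 0))) with (h * D + (w1 * r2 - w2 * r1)) in HAll
    by (unfold r1, r2, D; ring).
  assert (Rabs (w1 * r2 - w2 * r1) <= (Rabs w1 + Rabs w2) * (Rabs D / (2 * K) * Rabs h)).
  { eapply Rle_trans; [apply Rabs_triang|]. rewrite Rabs_Ropp, !Rabs_mult.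
    pose proof (Rabs_pos w1). pose proof (Rabs_pos w2).
    assert (Rabs w1 * Rabs r2 <= Rabs w1 * (Rabs D / (2 * K) * Rabs h)) by (apply Rmult_le_compat_l; auto).
    assert (Rabs w2 * Rabs r1 <= Rabs w2 * (Rabs D / (2 * K) * Rabs h)) by (apply Rmult_le_compat_l; auto).
    lra. }
  assert ((Rabs w1 + Rabs w2) * (Rabs D / (2 * K) * Rabs h) < Rabs D * (d / 2)).
  { rewrite Hh1. replace ((Rabs w1 + Rabs w2) * (Rabs D / (2 * K) * (d / 2)))
      with (((Rabs w1 + Rabs w2) / K) * (Rabs D * (d/2)) / 2) by (field; lra).
    assert ((Rabs w1 + Rabs w2) / K < 1).
    { apply Rmult_lt_reg_r with K; auto. unfold Rdiv. rewrite Rmult_assoc, Rinv_l by lra. unfold K; lra. }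
    assert (0 <= (Rabs w1 + Rabs w2) / K).
    { unfold Rdiv. apply Rmult_le_pos; [pose proof (Rabs_pos w1); pose proof (Rabs_pos w2); lra|left; apply Rinv_0_lt_compat; lra]. }
    assert (0 < Rabs D * (d/2)) by (apply Rmult_lt_0_compat; lra).
    nra. }
  pose proof (Rle_abs (w1 * r2 - w2 * r1)). lra.
Qed.

Lemma ray_uniq N g L v x s1 s2 : is_norm N -> is_gamma N g L -> gdiff g v -> det v x <> 0 ->
  curve_image g L (psub (g 0) (pscal s1 x)) -> curve_image g L (psub (g 0) (pscal s2 x)) ->
  0 < s1 -> 0 < s2 -> psub (g 0) (pscal s1 x) = psub (g 0) (pscal s2 x).
Proof.
  intros. destruct (Rtotal_order s1 s2) as [Hl|[He|Hg]].
  - exfalso; eapply (ray_core N g L v x s1 s2); eauto.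
  - subst; reflexivity.
  - exfalso; eapply (ray_core N g L v x s2 s1); eauto.
Qed.

Theorem mainTheorem9 (N : pt -> R) (g : R -> pt) (L : R) :
  is_norm N ->
  strictly_convex N ->
  finitely_many_nondiff_on_sphere N ->
  is_gamma N g L ->
  (* C is differentiable at a = g 0 *)
  (forall v w, is_rderiv g 0 v -> is_lderiv g 0 w -> v = w) ->
  exists (F : list pt) (seg : option pt),
    forall b : pt,
      (curve_image g L b /\ ~ ex_derive (fun t => N (psub (g t) b)) 0) <->
      (In b F \/ match seg with
                 | Some c => segment (g 0) c b
                 | None => False
                 end).
Proof.
  intros HN Hsc [lst Hlst] HG Hdiff.
  pose proof HG as HG'. destruct HG' as [HL [_ [_ [_ [Hder _]]]]].
  destruct (Hder 0) as [v [w [Hv [Hw [Nv _]]]]].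
  pose proof (Hdiff v w Hv Hw); subst w.
  pose proof (gdiff_of g v Hv Hw) as Hg.
  pose proof (norm_pos_ne N HN v Nv) as Vn.
  set (NDif := fun b => curve_image g L b /\ ~ ex_derive (fun t => N (psub (g t) b)) 0).
  set (Q := fun x b => curve_image g L b /\ det v x <> 0 /\
                       exists s, 0 < s /\ b = psub (g 0) (pscal s x)).
  set (pick := fun x => match excluded_middle_informative (exists b, Q x b) with
                        | left H => proj1_sig (constructive_indefinite_description _ H)
                        | right _ => g 0 end).
  set (cand := g 0 :: map pick lst).
  exists (filter (fun b => if excluded_middle_informative (NDif b) then true else false) cand), None.
  intro b. rewrite filter_In. split.
  - intro Hb. left. split; [|destruct excluded_middle_informative; [reflexivity|contradiction]].
    destruct (classic (b = g 0)) as [E|E]; [left; auto|right].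
    set (y := psub (g 0) b).
    assert (Hy : y <> (0,0)).
    { intro Z. apply E. unfold y, psub in Z. injection Z; intros. apply pt_eq; simpl; lra. }
    destruct (classic (det v y = 0)) as [Dy|Dy].
    { exfalso. destruct (par_diff N y v HN Hy Dy) as [l Hl]. apply (proj2 Hb).
      eapply f_deriv; eauto. }
    destruct (classic (differentiable2 N y)) as [Dn|Dn].
    { exfalso. destruct (dir_diff N y v Dn Vn) as [l Hl]. apply (proj2 Hb).
      eapply f_deriv; eauto. }
    assert (Ny : 0 < N y).
    { destruct (norm_nonneg N HN y) as [P|P]; auto. exfalso. apply Hy. destruct HN as [H0 _]. apply H0. auto. }
    assert (Yb : y = psub (g 0) b) by reflexivity. clearbody y.
    set (x := pscal (/ N y) y).
    assert (Nx : N x = 1).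
    { unfold x. destruct HN as [_ [Hs _]]. rewrite Hs, Rabs_pos_eq by (left; apply Rinv_0_lt_compat; lra). field. lra. }
    assert (Yx : y = pscal (N y) x).
    { unfold x. apply pt_eq; simpl; field; lra. }
    assert (Ndx : ~ differentiable2 N x).
    { intro D. apply Dn. rewrite Yx. apply diff_scal; auto. }
    assert (Ix : In x lst) by (apply Hlst; auto).
    apply in_map_iff. exists x. split; auto.
    assert (Bx : b = psub (g 0) (pscal (N y) x)).
    { rewrite <- Yx, Yb. apply pt_eq; simpl; ring. }
    assert (Dvx : det v x <> 0).
    { unfold x, det, pscal. simpl. intro Z. apply Dy.
      replace (det v y) with (N y * (fst v * (/ N y * snd y) - snd v * (/ N y * fst y)))
        by (unfold det; field; lra).
      rewrite Z; ring. }
    assert (Qb : Q x b) by (split; [apply Hb|split; [auto|exists (N y); split; auto]]).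
    unfold pick. destruct excluded_middle_informative as [Ex|Nex]; [|exfalso; apply Nex; exists b; auto].
    destruct constructive_indefinite_description as [b' Hb']. simpl.
    destruct Hb' as [C' [_ [s' [Ps' Bs']]]].
    rewrite Bs', Bx. apply (ray_uniq N g L v x); auto.
    + rewrite <- Bs'; auto.
    + rewrite <- Bx; apply Hb.
  - intros [[_ H]|[]]. destruct excluded_middle_informative as [P|P]; [exact P|discriminate].
Qed.
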